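(* Let $X_3\subset\mathbb{A}^2_{\mathbb{Q}}$ be the plane curve defined by $x^2-(2C+16)x+(C^3+8C^2+16C+64)=0$. Then the morphism $\varphi\colon\mathbb{A}^1_{\mathbb{Q}}\to X_3$, $t\mapsto(t^3-t^2+7t+1,\,-t^2-7)$, is the normalization of $X_3$.
   Context: The curve $X_3$ is the zero locus of $\widetilde\delta_3(x,C)=\delta_3(x,C/4)$, where $\delta_3$ is the third multiplier polynomial of the family $z\mapsto z^2+c$; its defining equation is as given. *)

(* Defs.v *)
From mathcomp Require Import all_boot all_order all_algebra.
Set Implicit Arguments. Unset Strict Implicit. Unset Printing Implicit Defensive.
Import GRing.Theory.
Local Open Scope ring_scope.

(* Bivariate polynomials over Q: Q[C][x], i.e. {poly {poly rat}}:
   the outer variable is x, the inner (coefficient) variable is C. *)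
Notation bipoly := {poly {poly rat}}.

(* Pullback of a polynomial function g(x,C) along t |-> (a t, b t):
   phistar a b g = g(a(t), b(t)) in Q[t]. *)
Definition phistar (a b : {poly rat}) (g : bipoly) : {poly rat} :=
  (map_poly (fun q : {poly rat} => q \Po b) g).[a].

(* The morphism phi : A^1 -> X_f, t |-> (a t, b t), is the normalization of the
   affine plane curve X_f = V(f) (with coordinate ring A = Q[x,C]/(f)):
   - the ring map phi^# : Q[x,C] -> Q[t] has kernel exactly (f) (so phi lands in
     X_f, phi^# : A -> Q[t] is injective, i.e. phi is dominant and X_f integral);
   - Q[t] is contained in Frac(A) (birationality): every g is p/q with p,q in A,
     q nonzero;
   - Q[t] is integral over A (finiteness): every g satisfies a monic equation with
     coefficients in A.
   Together with the normality of A^1 (Q[t] is integrally closed) this says that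
   Q[t] is the integral closure of A in its fraction field, i.e. phi is the
   normalization of X_f. *)
Definition is_normalization_A1 (f : bipoly) (a b : {poly rat}) : Prop :=
  [/\ (forall g : bipoly, phistar a b g = 0 <-> exists h : bipoly, g = h * f),
      (forall g : {poly rat}, exists p q : bipoly,
          phistar a b q != 0 /\ g * phistar a b q = phistar a b p)
    & (forall g : {poly rat}, exists c : seq bipoly,
          g ^+ (size c) + \sum_(i < size c) phistar a b c`_i * g ^+ i = 0)].

Definition Cv : bipoly := ('X : {poly rat})%:P.
Definition Xv : bipoly := 'X.
Definition f_X3 : bipoly :=
  Xv ^+ 2 - (2 * Cv + 16) * Xv + (Cv ^+ 3 + 8 * Cv ^+ 2 + 16 * Cv + 64).

Definition phi_x : {poly rat} := 'X ^+ 3 - 'X ^+ 2 + 7 * 'X + 1.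
Definition phi_C : {poly rat} := - 'X ^+ 2 - 7.

(* Main.v *)
Require Import Defs.
From mathcomp Require Import all_boot all_order all_algebra.
From mathcomp Require Import ring zify.
Import GRing.Theory.
Local Open Scope ring_scope.

Section Aux.
Variables a b : {poly rat}.

Lemma phD g h : phistar a b (g + h) = phistar a b g + phistar a b h.
Proof. by rewrite /phistar rmorphD hornerD. Qed.
Lemma phM g h : phistar a b (g * h) = phistar a b g * phistar a b h.
Proof. by rewrite /phistar rmorphM hornerM. Qed.
Lemma phN g : phistar a b (- g) = - phistar a b g.
Proof. by rewrite /phistar rmorphN hornerN. Qed.
Lemma phB g h : phistar a b (g - h) = phistar a b g - phistar a b h.
Proof. by rewrite phD phN. Qed.
Lemma phX g n : phistar a b (g ^+ n) = phistar a b g ^+ n.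
Proof. by rewrite /phistar rmorphXn horner_exp. Qed.
Lemma phC (c : rat) : phistar a b (c%:P%:P) = c%:P.
Proof. by rewrite /phistar map_polyC /= hornerC comp_polyC. Qed.
Lemma phn n : phistar a b (n%:R) = n%:R.
Proof. by rewrite /phistar rmorph_nat -polyC_natr hornerC. Qed.
Lemma phXv : phistar a b Xv = a.
Proof. by rewrite /phistar /Xv map_polyX hornerX. Qed.
Lemma phCv : phistar a b Cv = b.
Proof. by rewrite /phistar /Cv map_polyC /= hornerC comp_polyX. Qed.
Lemma ph0 : phistar a b 0 = 0.
Proof. by rewrite /phistar rmorph0 horner0. Qed.
Lemma ph1 : phistar a b 1 = 1.
Proof. by rewrite /phistar rmorph1 hornerC. Qed.
End Aux.

Notation ph := (phistar phi_x phi_C).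

Lemma phf : ph f_X3 = 0.
Proof.
rewrite /f_X3 !(phD, phB, phN, phM, phX, phXv, phCv).
rewrite ?ph1.
rewrite /phi_x /phi_C; ring.
Qed.

Lemma size_map_le (h : {poly rat} -> {poly rat}) (p : bipoly) :
  (size (map_poly h p) <= size p)%N.
Proof. by rewrite /map_poly; apply: size_poly. Qed.

Definition Acoef : {poly rat} := 2 * 'X + 16.
Definition Bcoef : {poly rat} := 'X ^+ 3 + 8 * 'X ^+ 2 + 16 * 'X + 64.

Lemma fE : f_X3 = ('X - Acoef%:P) * 'X + Bcoef%:P.
Proof.
rewrite /f_X3 /Acoef /Bcoef /Cv /Xv.
rewrite !(rmorphD, rmorphM, rmorphXn, rmorph_nat) /=.
ring.
Qed.

Lemma f_monic : f_X3 \is monic.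
Proof.
have m1 : ('X - Acoef%:P) * 'X \is monic by rewrite monicMl ?monicXsubC ?monicX.
have s1 : size (('X - Acoef%:P) * 'X) = 3%N.
  by rewrite size_Mmonic ?monicX ?size_XsubC ?size_polyX // -size_poly_eq0 size_XsubC.
rewrite fE monicE lead_coefDl; first exact: m1.
by rewrite s1; apply: leq_ltn_trans (size_polyC_leq1 _) _.
Qed.

Lemma f_size : size f_X3 = 3%N.
Proof.
have s1 : size (('X - Acoef%:P) * 'X) = 3%N.
  by rewrite size_Mmonic ?monicX ?size_XsubC ?size_polyX // -size_poly_eq0 size_XsubC.
rewrite fE size_polyDl s1 //; by apply: leq_ltn_trans (size_polyC_leq1 _) _.
Qed.

Lemma phC_size : size phi_C = 3%N.
Proof.
have -> : phi_C = - ('X^2 + 7%:P).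
  by rewrite /phi_C polyC_natr; ring.

by rewrite size_polyN size_XnaddC.
Qed.

Lemma comp_eq0 p : p \Po phi_C = 0 -> p = 0.
Proof.
move=> h; apply/eqP; apply: contraT => nz.
have := lead_coef_comp p (q:=phi_C); rewrite phC_size h lead_coef0 => /(_ isT) /esym/eqP.
rewrite mulf_eq0 lead_coef_eq0 (negbTE nz) /= expf_eq0 lead_coef_eq0 -size_poly_eq0 phC_size.
by rewrite andbF.
Qed.

Lemma phx_size : size phi_x = 4%N.
Proof.
have -> : phi_x = ((('X - 1%:P) * 'X + 7%:P) * 'X + 1%:P).
  by rewrite /phi_x polyC_natr polyC1; ring.
rewrite !size_MXaddC size_XsubC /=.
have nz1 : ('X - 1%:P : {poly rat}) != 0 by rewrite -size_poly_eq0 size_XsubC.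
by rewrite oner_eq0 andbF (negbTE nz1).
Qed.

Lemma ker_lin (r0 r1 : {poly rat}) :
  r0 \Po phi_C + (r1 \Po phi_C) * phi_x = 0 -> r0 = 0 /\ r1 = 0.
Proof.
move=> h.
have hr1 : r1 = 0.
  apply/eqP; apply: contraT => nz.
  have Qnz : r1 \Po phi_C != 0 by apply: contra nz => /eqP /comp_eq0 ->.
  have sQ := size_comp_poly r1 phi_C; rewrite phC_size in sQ.
  have sP := size_comp_poly r0 phi_C; rewrite phC_size in sP.
  have xnz : phi_x != 0 by rewrite -size_poly_eq0 phx_size.
  have sM := size_mul Qnz xnz; rewrite phx_size in sM.
  have hP : r0 \Po phi_C = - ((r1 \Po phi_C) * phi_x) by apply/eqP; rewrite -addr_eq0 h.
  rewrite hP size_polyN sM in sP.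
  move: Qnz; rewrite -size_poly_eq0.
  move: sP sQ; case: (size (r1 \Po phi_C)) => [|k] //= sP sQ _.
  lia.
split => //.
by apply: comp_eq0; move: h; rewrite hr1 comp_poly0 mul0r addr0.
Qed.

Theorem lemma2p6 : is_normalization_A1 f_X3 phi_x phi_C.
Proof.
split.
- move=> g; split.
  + move=> hg.
    have E := Pdiv.RingMonic.rdivp_eq f_monic g.
    set q := Pdiv.CommonRing.rdivp g f_X3 in E.
    set r := Pdiv.CommonRing.rmodp g f_X3 in E.
    exists q.
    have hs : (size r < 3)%N.
      by rewrite -f_size Pdiv.Ring.ltn_rmodpN0 // monic_neq0 // f_monic.
    have hr : ph r = 0.
      by move: hg; rewrite E phD phM phf mulr0 add0r.
    move: hr; rewrite /phistar (horner_coef_wide _ (leq_trans (size_map_le _ _) hs)).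
    rewrite !big_ord_recr big_ord0 /= !coef_map /= expr0 expr1 mulr1 add0r.
    move=> /ker_lin [h0 h1].
    have r0 : r = 0.
      apply/polyP => i; rewrite coef0.
      case: i => [|[|i]]; [exact: h0 | exact: h1 | apply: nth_default].
      have hs2 : (size r <= 2)%N := hs.
      exact: (leq_trans hs2 (isT : (2 <= i.+2)%N)).
    by rewrite E r0 addr0.
  + by move=> [h ->]; rewrite phM phf mulr0.
- move=> g.
  have [n [p hp]] : exists n p, g * phi_C ^+ n = ph p.
    elim/poly_ind: g => [|g c [n [p hp]]].
      by exists 0%N, 0; rewrite mul0r ph0.
    exists n.+1, (p * (Cv + 8 - Xv) + (c%:P)%:P * Cv ^+ n.+1).
    rewrite !(phD, phB, phN, phM, phX, phXv, phCv, phC, ph1) -hp.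
    rewrite /phi_C /phi_x exprS; ring.
  exists p, (Cv ^+ n); split.
    by rewrite phX phCv expf_neq0 // -size_poly_eq0 phC_size.
  by rewrite phX phCv hp.
- move=> g.
  have [u [v huv]] : exists u v, g = ph u + ph v * 'X.
    elim/poly_ind: g => [|g c [u [v ->]]].
      by exists 0, 0; rewrite ph0 mul0r addr0.
    exists (v * (- Cv - 7) + c%:P%:P), u.
    rewrite !(phD, phB, phN, phM, phX, phXv, phCv, phC, ph1) /phi_C; ring.
  exists [:: u ^+ 2 + v ^+ 2 * (Cv + 7); - (2 * u)].
  rewrite /= !big_ord_recr big_ord0 /= huv.
  rewrite !(phD, phB, phN, phM, phX, phXv, phCv, phC, ph1) /phi_C; ring.
Qed.
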